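(* Let $p=p_n\in(0,1)$ with $f_n:=n p_n\to 0$, and let $G\sim\mathcal{G}(n,p_n)$ with $m$ its number of edges. Let $\phi(\delta)=(1+\delta)\ln(1+\delta)-\delta$, $\delta_n=\phi^{-1}(2\ln 2/f_n)$ and $C_n=\left(1+(1+\delta_n)\frac{n-1}{n}f_n\right)^{-1}$. For $1\le u\le n$ define $$w_n(u)=\sum_{i=n-u}^{n}\binom{i}{i-(n-u)}(1-p_n)^{\binom{i-(n-u)}{2}}\,\mathbb{P}\left(m\ge\frac{n^2}{2u}-\frac{n}{2}\right),$$ and $\mathbb{T}^2(n,p)=\sum_{nC_n\le u\le n}w_n(u)$. Then $\mathbb{T}^2(n,p)$ has subexponential growth in $n$. Furthermore, there exist a constant $h>0$ and a sequence $\gamma_n$ of at most polynomial growth such that $$\mathbb{T}^2(n,p)\le\gamma_n\exp\left(h\cdot n\cdot\left(\ln\frac{1}{f_n}\right)^{-1}\ln\left(\ln\frac{1}{f_n}\right)\right).$$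
   Context: $\mathcal{G}(n,p)$ is the binomial random graph on $n$ vertices in which each of the $\binom{n}{2}$ pairs of vertices is an edge with probability $p$, independently. $\phi$ is increasing on $[0,\infty)$, so $\phi^{-1}$ is well defined. The quantity $w_n(u)$ is the paper's bound on the expected number of nodes with potential $u$ in the best-first branch-and-bound search tree for maximum independent set (potential of a partial solution $S\subseteq\{v_1,\dots,v_i\}$ being $|S|+n-i$). *)

(* Defs.v *)
From HB Require Import structures.
From mathcomp Require Import all_boot all_order all_algebra.
From mathcomp Require Import all_classical all_reals all_analysis.
Set Implicit Arguments. Unset Strict Implicit. Unset Printing Implicit Defensive.
Import Order.TTheory GRing.Theory Num.Theory.
Import numFieldNormedType.Exports.
Local Open Scope classical_set_scope.
Local Open Scope ring_scope.

Definition phi {R : realType} (d : R) : R := (1 + d) * ln (1 + d) - d.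

(* phi^{-1} on [0,oo): phi is continuous, increasing, phi 0 = 0, unbounded,
   so the supremum below is the unique d >= 0 with phi d = y (for y >= 0). *)
Definition phi_inv {R : realType} (y : R) : R :=
  sup [set d : R | 0 <= d /\ phi d <= y].

(* potential edges of a graph on vertex set 'I_n *)
Definition pairs (n : nat) : {set 'I_n * 'I_n} := [set e : 'I_n * 'I_n | (nat_of_ord e.1 < nat_of_ord e.2)%N].

(* P(m >= t) where m = number of edges of G ~ G(n,q): sum over all edge sets *)
Definition prob_edges_ge {R : realType} (n : nat) (q : R) (t : R) : R :=
  \sum_(E : {set 'I_n * 'I_n} | (E \subset pairs n) && (t <= (#|E|)%:R))
     q ^+ #|E| * (1 - q) ^+ (#|pairs n| - #|E|).

Section Defs.
Variable R : realType.
Variable p : nat -> R.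

Definition f_seq (n : nat) : R := n%:R * p n.
Definition delta_seq (n : nat) : R := phi_inv (2 * ln 2 / f_seq n).
Definition C_seq (n : nat) : R :=
  (1 + (1 + delta_seq n) * ((n.-1)%:R / n%:R) * f_seq n)^-1.

Definition w_seq (n u : nat) : R :=
  \sum_(n - u <= i < n.+1)
     ('C(i, i - (n - u)))%:R * (1 - p n) ^+ 'C(i - (n - u), 2)
       * prob_edges_ge n (p n) ((n%:R ^+ 2) / (2 * u%:R) - n%:R / 2).

Definition T2 (n : nat) : R :=
  \sum_(1 <= u < n.+1 | n%:R * C_seq n <= u%:R) w_seq n u.
End Defs.

(* Main.v *)
Require Import Defs.
From HB Require Import structures.
From mathcomp Require Import all_boot all_order all_algebra.
From mathcomp Require Import all_classical all_reals all_analysis.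
From mathcomp Require Import ring lra zify.
Import Order.TTheory GRing.Theory Num.Theory.
Import numFieldNormedType.Exports.
Local Open Scope classical_set_scope.
Local Open Scope ring_scope.

Lemma prob_le1 (R : realType) n (q t : R) : 0 <= q <= 1 -> prob_edges_ge n q t <= 1.
Proof.
move=> /andP[q0 q1].
pose F (i : 'I_n * 'I_n) : R := if i \in pairs n then q else 0.
pose G (i : 'I_n * 'I_n) : R := if i \in pairs n then 1 - q else 1.
pose T (J : {set 'I_n * 'I_n}) := \prod_i (if i \in J then F i else G i).
have H1 : \prod_i (F i + G i) = 1.
  by apply: big1 => i _; rewrite /F /G; case: ifP => _; rewrite ?add0r // addrC subrK.
have HD := (@bigA_distr R 0 1 *%R +%R _ F G).
rewrite H1 in HD.
have T0 J : 0 <= T J.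
  apply: prodr_ge0 => i _; rewrite /F /G; case: ifP => _; case: ifP => _ //; lra.
have TE (E : {set 'I_n * 'I_n}) : E \subset pairs n -> T E = q ^+ #|E| * (1 - q) ^+ (#|pairs n| - #|E|).
  move=> sE; rewrite /T (bigID (mem E)) /=; congr (_ * _).
    rewrite -prodr_const; apply: eq_big => // i /= iE; rewrite iE /F.
    by rewrite (fintype.subsetP sE _ iE).
  rewrite (bigID (mem (pairs n))) /= [X in _ * X]big1 ?mulr1; last first.
    by move=> i /andP[/negbTE -> /negbTE]; rewrite /G => ->.
  rewrite -(cardsDS sE) -prodr_const; apply: eq_big => [i|i /andP[/negbTE -> ip]].
    by rewrite !inE andbC.
  by rewrite /G ip.
rewrite /prob_edges_ge.
apply: (@le_trans _ _ (\sum_(E : {set 'I_n * 'I_n} | (E \subset pairs n) && (t <= (#|E|)%:R)) T E)).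
  by rewrite le_eqVlt; apply/orP; left; apply/eqP; apply: eq_bigr => E /andP[sE _]; rewrite TE.
rewrite [X in _ <= X]HD [X in _ <= X](eq_bigl predT) //.
rewrite [X in X <= _]big_mkcond /=; apply: ler_sum => E _; case: ifP => _ //; exact: T0.
Qed.

Lemma prob_ge0 (R : realType) n (q t : R) : 0 <= q <= 1 -> 0 <= prob_edges_ge n q t.
Proof.
move=> /andP[q0 q1]; apply: sumr_ge0 => E _; apply: mulr_ge0; apply: exprn_ge0; lra.
Qed.

Lemma w_le (R : realType) (p : nat -> R) n u : 0 < p n < 1 -> (u <= n)%N ->
  w_seq p n u <= (n.+1)%:R * ('C(n, n - u))%:R.
Proof.
move=> /andP[p0 p1] un; rewrite /w_seq.
have hP : 0 <= prob_edges_ge n (p n) ((n%:R ^+ 2) / (2 * u%:R) - n%:R / 2) <= 1.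
  by rewrite prob_ge0 ?prob_le1 //; apply/andP; split; lra.
move: hP => /andP[P0 P1].
apply: (@le_trans _ _ (\sum_(n - u <= i < n.+1) ('C(n, n - u))%:R)).
  apply: ler_sum_nat => i /andP[ki iln].
  have hb : ('C(i, i - (n - u)))%:R <= ('C(n, n - u))%:R :> R.
    rewrite ler_nat bin_sub //; apply: leq_bin2l; by rewrite -ltnS.
  have he : 0 <= (1 - p n) ^+ 'C(i - (n - u), 2) <= 1.
    by rewrite exprn_ge0 ?exprn_ile1 //; lra.
  move: he => /andP[e0 e1].
  have c0 : 0 <= ('C(i, i - (n - u)))%:R :> R by [].
  apply: (le_trans _ hb); apply: (le_trans (ler_piMr _ P1)); first exact: mulr_ge0.
  exact: ler_piMr.
rewrite sumr_const_nat -mulrnA -natrM ler_nat mulnC; apply: leq_mul => //; exact: leq_subr.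
Qed.

Lemma binom_le (R : realType) n k (x : R) : 0 <= x ->
  ('C(n, k))%:R * x ^+ k <= (1 + x) ^+ n.
Proof.
move=> x0; have [kn|nk] := leqP k n; last first.
  by rewrite bin_small // mul0r exprn_ge0 // addr_ge0.
have kn1 : (k < n.+1)%N by [].
rewrite addrC exprD1n (bigD1 (Ordinal kn1)) //= mulr_natl lerDl.
by apply: sumr_ge0 => i _; apply: mulrn_wge0; apply: exprn_ge0.
Qed.

Lemma ln_le_sub1 (R : realType) (x : R) : 0 < x -> ln x <= x - 1.
Proof.
move=> x0; have h : -1 < x - 1 by lra.
by have := @le_ln1Dx R (x - 1) h; rewrite addrCA subrr addr0.
Qed.

Lemma ln2_bounds (R : realType) : 0 <= ln (2 : R) <= 1 /\ 2 <= expR (1 : R).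
Proof.
split; last by have := @expR_ge1Dx R 1; rewrite (_ : 1 + 1 = 2 :> R) //.
have h := @ln_le_sub1 R 2 (ltr0Sn R 1).
have h0 : 0 <= ln (2 : R) by apply: ln_ge0; lra.
apply/andP; split => //; lra.
Qed.

Lemma delta_le (R : realType) (f : R) : 0 < f < 1 ->
  0 <= phi_inv (2 * ln 2 / f) <= 2 * expR 1 / (f * ln f^-1).
Proof.
move=> /andP[f0 f1].
have L0 : 0 < ln f^-1 by apply: ln_gt0; rewrite invf_gt1.
set L := ln f^-1 in L0 *.
have [/andP[l20 l21] e2] := @ln2_bounds R.
set y := 2 * ln 2 / f.
set D := 2 * expR 1 / (f * L).
have D0 : 0 < D by rewrite /D divr_gt0 ?mulr_gt0 ?expR_gt0.
have lnD : 1 + L / 2 <= ln D.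
  have -> : ln D = ln 2 + 1 + L - ln L.
    rewrite /D invfM !lnM ?posrE ?mulr_gt0 ?invr_gt0 ?expR_gt0 //.
    by rewrite expRK -/L lnV ?posrE // addrA.
  have : ln L <= L / 2.
    have -> : ln L = ln (L / 2) + ln 2.
      by rewrite -lnM ?posrE ?divr_gt0 // mulfVK.
    have := @ln_le_sub1 R _ (divr_gt0 L0 (ltr0Sn R 1)); rewrite -/L; lra.
  lra.
have ub : forall d, [set d : R | 0 <= d /\ phi d <= y] d -> d <= D.
  move=> d [d0 pd]; rewrite leNgt; apply/negP => dD.
  have ln1d : ln D <= ln (1 + d) by rewrite ler_ln ?posrE; lra.
  set a := ln (1 + d) in ln1d.
  have a0 : 0 <= a by lra.
  have h1 : d * (L / 2) <= phi d.
    rewrite /phi -/a; nra.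
  have h2 : D * (L / 2) < d * (L / 2) by rewrite ltr_pM2r // divr_gt0.
  have h3 : D * (L / 2) = expR 1 / f by rewrite /D; field; apply/andP; split; lra.
  have h4 : y <= expR 1 / f.
    by rewrite /y ler_pM2r ?invr_gt0 //; lra.
  lra.
have S0 : [set d : R | 0 <= d /\ phi d <= y] 0.
  split => //; rewrite /phi addr0 ln1 mulr0 subr0 /y; apply: divr_ge0 => //; lra.
apply/andP; split.
  apply: (ub_le_sup _ S0); by exists D.
apply: ge_sup; first by exists 0.
exact: ub.
Qed.

Lemma binom_exp (R : realType) n k (L K : R) : 1 <= L -> k%:R <= K ->
  ('C(n, k))%:R <= expR (n%:R / L + K * ln L).
Proof.
move=> L1 kK.
have L0 : 0 < L by lra.
have iL0 : 0 <= L^-1 by rewrite invr_ge0; lra.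
have hb := @binom_le R n k L^-1 iL0.
have Lk0 : 0 < L ^+ k by apply: exprn_gt0.
have h1 : ('C(n, k))%:R <= (1 + L^-1) ^+ n * L ^+ k.
  have -> : ('C(n, k))%:R = ('C(n, k))%:R * L^-1 ^+ k * L ^+ k :> R.
    by rewrite exprVn mulfVK // gt_eqF.
  by rewrite ler_pM2r.
have h2 : (1 + L^-1) ^+ n <= expR (n%:R / L).
  rewrite mulrC expRM_natr; apply: lerXn2r; rewrite ?nnegrE ?expR_ge0 ?expR_ge1Dx //.
  by apply: addr_ge0 => //; rewrite invr_ge0; lra.
have h3 : L ^+ k <= expR (K * ln L).
  rewrite -{1}(lnK (x := L)) ?posrE // -expRM_natl ler_expR ler_wpM2r //.
  exact: ln_ge0.
rewrite expRD; apply: (le_trans h1); apply: ler_pM => //.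
by apply: exprn_ge0; apply: addr_ge0.
exact: ltW.
Qed.

Lemma core (R : realType) (p : nat -> R) (hp : forall n, 0 < p n < 1) n :
  (0 < n)%N -> f_seq p n <= expR (- expR 1) ->
  T2 p n <= (n * n.+1)%:R *
    expR ((2 + 2 * expR 1) * n%:R * (ln (f_seq p n)^-1)^-1 * ln (ln (f_seq p n)^-1)).
Proof.
move=> n0 fe.
have n0' : (0 : R) < n%:R by rewrite ltr0n.
have /andP[pn0 pn1] := hp n.
have f0 : 0 < f_seq p n by rewrite /f_seq mulr_gt0.
have e0 : 0 < expR (1 : R) by exact: expR_gt0.
have f1 : f_seq p n < 1.
  apply: (le_lt_trans fe); rewrite expR_lt1; lra.
have hd := @delta_le R (f_seq p n); move: hd.
rewrite f0 f1 => /(_ isT) /andP[d0 d1].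
rewrite /T2 /C_seq -/(delta_seq p n) in d0 d1 *.
set f := f_seq p n in f0 f1 fe d0 d1 *.
set d := delta_seq p n in d0 d1 *.
have Le : expR 1 <= ln f^-1.
  rewrite lnV ?posrE // lerNr -[X in _ <= X](expRK) ler_ln ?posrE ?expR_gt0 //.
set L := ln f^-1 in Le d1 *.
have L1 : 1 <= L by have := @ln2_bounds R; lra.
have L0 : 0 < L by lra.
have lnL1 : 1 <= ln L.
  have h : ln (expR 1) <= ln L by rewrite ler_ln ?posrE ?expR_gt0.
  by rewrite expRK in h.
have fL : f * L <= 1.
  have := @ln_le_sub1 R f^-1; rewrite invr_gt0 => /(_ f0); rewrite -/L => h.
  have : f * L <= f * (f^-1 - 1) by rewrite ler_pM2l.
  rewrite mulrBr mulfV ?gt_eqF //; lra.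
set Li := L^-1.
have LLi : L * Li = 1 by rewrite /Li mulfV ?gt_eqF.
have Li0 : 0 < Li by rewrite /Li invr_gt0.
pose c0 : R := 1 + 2 * expR 1.
set r := (n.-1)%:R / n%:R.
have r0 : 0 <= r <= 1.
  rewrite /r divr_ge0 //= ler_pdivrMr // mul1r ler_nat; exact: leq_pred.
move: r0 => /andP[r0 r1].
set A := (1 + d) * r * f.
have A0 : 0 <= A by rewrite /A !mulr_ge0 //; lra.
have Ac : A <= c0 * Li.
  have h1 : A <= (1 + d) * f by rewrite /A ler_wpM2r //; [lra | rewrite ler_piMr //; lra].
  have h2 : d * f <= 2 * expR 1 * Li.
    have : d * f <= 2 * expR 1 / (f * L) * f by rewrite ler_wpM2r //; lra.
    move=> h; apply: (le_trans h); rewrite le_eqVlt; apply/orP; left; apply/eqP; rewrite /Li; field; rewrite !gt_eqF // ; lra.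

  have h3 : f <= Li.
    have : f * L * Li <= 1 * Li by rewrite ler_wpM2r //; lra.
    by rewrite -mulrA LLi mulr1 mul1r.
  rewrite /c0; lra.
set C := (1 + A)^-1.
have C1 : 1 - C <= A.
  have CA : C * (1 + A) = 1 by rewrite /C mulVf // gt_eqF //; lra.
  have C0 : 0 < C by rewrite /C invr_gt0; lra.
  nra.
set E := (2 + 2 * expR 1) * n%:R * Li * ln L.
have Bge0 : 0 <= (n.+1)%:R * expR E by rewrite mulr_ge0 ?expR_ge0.
rewrite big_mkcond /=.
apply: (@le_trans _ _ (\sum_(1 <= u < n.+1) ((n.+1)%:R * expR E))); last first.
  rewrite sumr_const_nat subn1 /= -[_ *+ n]mulr_natr natrM le_eqVlt; apply/orP; left; apply/eqP; ring.
apply: ler_sum_nat => u /andP[u1 un]; case: ifP => // hu.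
have un' : (u <= n)%N by rewrite -ltnS.
apply: (le_trans (@w_le R p n u (hp n) un')).
apply: ler_wpM2l => //.
set K := n%:R * c0 * Li.
apply: (le_trans (@binom_exp R n (n - u) L K L1 _)).
  rewrite natrB // /K.
  have : n%:R * (1 - C) <= n%:R * (c0 * Li) by rewrite ler_pM2l //; lra.
  lra.
rewrite ler_expR /E /K /c0.
have : n%:R * Li <= n%:R * Li * ln L by rewrite ler_peMr // mulr_ge0 //; lra.
have : 0 <= n%:R * Li by rewrite mulr_ge0 //; lra.
rewrite -/Li => h0 h1.
have -> : n%:R * (1 + 2 * expR 1) * Li * ln L = n%:R * Li * ln L + 2 * expR 1 * (n%:R * Li * ln L) by ring.
have -> : (2 + 2 * expR 1) * n%:R * Li * ln L = 2 * (n%:R * Li * ln L) + 2 * expR 1 * (n%:R * Li * ln L) by ring.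
lra.
Qed.

Lemma f_small (R : realType) (p : nat -> R) (hp : forall n, 0 < p n < 1)
  (hf : f_seq p @ \oo --> (0 : R)) (e : R) : 0 < e ->
  \forall n \near \oo, f_seq p n < e.
Proof.
move=> e0; have H := cvgr_dist_lt _ _ hf e e0.
near=> n; apply: le_lt_trans (ler_norm _) _; rewrite -normrN -sub0r; near: n; exact: H.
Unshelve. all: end_near.
Qed.

Lemma L_big (R : realType) (f M : R) : 0 < f -> f <= expR (- M) -> M <= ln f^-1.
Proof.
move=> f0 fM; rewrite lnV ?posrE // lerNr.
have h : ln f <= ln (expR (- M)) by rewrite ler_ln ?posrE ?expR_gt0.
by rewrite expRK in h.
Qed.

Lemma poly_le (R : realType) n : (0 < n)%N -> (n * n.+1)%:R <= 2 * n%:R ^+ 2 :> R.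
Proof.
move=> n0; rewrite -natrX -(natrM R 2) ler_nat.
rewrite expnS expn1; nia.
Qed.

Theorem proposition3 (R : realType) (p : nat -> R)
  (hp : forall n, 0 < p n < 1)
  (hf : f_seq p @ \oo --> (0 : R)) :
  (forall eps : R, 0 < eps ->
     \forall n \near \oo, T2 p n <= expR (eps * n%:R))
  /\
  (exists h : R, 0 < h /\
   exists gamma : nat -> R,
     (exists (c : R) (k : nat), forall n, (0 < n)%N -> gamma n <= c * n%:R ^+ k) /\
     \forall n \near \oo,
       T2 p n <= gamma n *
         expR (h * n%:R * (ln (f_seq p n)^-1)^-1 * ln (ln (f_seq p n)^-1))).
Proof.
pose h : R := 2 + 2 * expR 1.
have h0 : 0 < h by rewrite /h addr_gt0 // mulr_gt0 // expR_gt0.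
have Hcore : \forall n \near \oo, T2 p n <= (n * n.+1)%:R *
    expR (h * n%:R * (ln (f_seq p n)^-1)^-1 * ln (ln (f_seq p n)^-1)).
  near=> n; apply: core => //.
    near: n; exact: nbhs_infty_gt.
  apply: ltW; near: n; apply: f_small => //; exact: expR_gt0.
split; last first.
  exists h; split => //; exists (fun n => (n * n.+1)%:R); split => //.
  by exists 2, 2%N => n n0; apply: poly_le.
move=> eps eps0.
pose a := eps / (4 * h).
have a0 : 0 < a by rewrite /a divr_gt0 // mulr_gt0.
pose M := (-1 - ln a) / a.
near=> n.
have Hn : T2 p n <= (n * n.+1)%:R *
    expR (h * n%:R * (ln (f_seq p n)^-1)^-1 * ln (ln (f_seq p n)^-1)).
  by near: n; exact: Hcore.
have n0 : (0 < n)%N by near: n; exact: nbhs_infty_gt.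
have f0 : 0 < f_seq p n.
  have /andP[p0 _] := hp n; by rewrite /f_seq mulr_gt0 // ltr0n.
have Le : expR 1 <= ln (f_seq p n)^-1.
  apply: L_big; rewrite ?opprK //; apply: ltW; near: n; apply: f_small => //; exact: expR_gt0.
have LM : M <= ln (f_seq p n)^-1.
  apply: L_big => //; apply: ltW; near: n; apply: f_small => //; exact: expR_gt0.
have nbig : 96 / eps ^+ 3 <= n%:R.
  by near: n; exact: nbhs_infty_ger.
move: Hn Le LM; set L := ln (f_seq p n)^-1 => Hn Le LM.
have L0 : 0 < L by apply: lt_le_trans Le; exact: expR_gt0.
have lnL : ln L <= 2 * a * L.
  have -> : ln L = ln (a * L) - ln a by rewrite lnM ?posrE //; ring.
  have h1 := @ln_le_sub1 R (a * L) (mulr_gt0 a0 L0).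
  have h2 : -1 - ln a <= a * L.
    have : M * a <= L * a by rewrite ler_pM2r.
    by rewrite /M mulfVK ?gt_eqF // mulrC.
  lra.
have E1 : h * n%:R * L^-1 * ln L <= eps / 2 * n%:R.
  have nL0 : 0 <= h * n%:R * L^-1 by rewrite !mulr_ge0 // ?invr_ge0 ltW.
  apply: (le_trans (ler_wpM2l nL0 lnL)).
  rewrite le_eqVlt; apply/orP; left; apply/eqP; rewrite /a; field.
  by apply/andP; split; rewrite gt_eqF.
have G1 : (n * n.+1)%:R <= expR (eps / 2 * n%:R).
  apply: (le_trans (@poly_le R n n0)).
  have := @expR_ge1Dxn R (eps / 2 * n%:R) 2 (mulr_ge0 (ltW (divr_gt0 eps0 (ltr0Sn R 1))) (ler0n _ _)).
  apply: le_trans.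
  have N0 : (0 : R) < n%:R by rewrite ltr0n.
  have e3 : 0 < eps ^+ 3 by exact: exprn_gt0.
  have hN : 96 <= eps ^+ 3 * n%:R.
    by move: nbig; rewrite ler_pdivrMr // mulrC.
  have -> : 1 + (eps / 2 * n%:R) ^+ 3 / (3`!)%:R = 1 + (eps ^+ 3 * n%:R) * n%:R ^+ 2 / 48.
    by rewrite (_ : 3`! = 6)%N //; field.
  have : 2 * n%:R ^+ 2 = 96 * n%:R ^+ 2 / 48 :> R by field.
  have : 96 * n%:R ^+ 2 <= eps ^+ 3 * n%:R * n%:R ^+ 2 by rewrite ler_pM2r // exprn_gt0.
  lra.
apply: (le_trans Hn).
have -> : expR (eps * n%:R) = expR (eps / 2 * n%:R) * expR (eps / 2 * n%:R).
  by rewrite -expRD; congr expR; field.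
apply: ler_pM => //.
by rewrite ler_expR.
Unshelve. all: end_near.
Qed.
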